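(* Let $G$ be a graph, let $k\ge 0$, let $C\subseteq V(G)$, and let $x_0\in V(G)\setminus C$, such that $G[C]$ is connected, $x_0$ has a neighbour in $C$, and $\chi(C)>k\,\chi^1(G)$. Then there is an induced path $x_0\hbox{-}\cdots\hbox{-}x_k$ of $G$ with $x_1,\ldots,x_k\in C$, and a subset $C'$ of $C$, such that: $x_0,\ldots,x_k\notin C'$; $G[C']$ is connected; $x_k$ has a neighbour in $C'$, and $x_0,\ldots,x_{k-1}$ have no neighbours in $C'$; and $\chi(C')\ge \chi(C)-k\,\chi^1(G)$.
   Context: Graphs are finite and simple. For $X\subseteq V(G)$, $\chi(X)$ means $\chi(G[X])$. $N^1[v]$ is the set consisting of $v$ and its neighbours, and $\chi^1(G)$ is the maximum of $\chi(N^1[v])$ over all $v\in V(G)$ (and $0$ for the null graph). *)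

(* Defs.v *)
From mathcomp Require Import all_boot.
Set Implicit Arguments. Unset Strict Implicit. Unset Printing Implicit Defensive.

(* A finite simple graph: vertex type T : finType, adjacency e : rel T,
   assumed symmetric and irreflexive in the theorem. *)
Section Graph.
Variables (T : finType) (e : rel T).

Definition colorable (X : {set T}) (k : nat) : bool :=
  [exists f : {ffun T -> 'I_k},
     [forall x in X, forall y in X, (x != y) && e x y ==> (f x != f y)]].

Lemma colorable_exists (X : {set T}) : exists k, colorable X k.
Proof.
exists #|T|; apply/existsP; exists [ffun x => enum_rank x].
apply/forallP => x; apply/implyP => _; apply/forallP => y; apply/implyP => _.
apply/implyP => /andP [nxy _]; rewrite !ffunE.
by apply: contra nxy => /eqP /enum_rank_inj ->.
Qed.

Definition chi (X : {set T}) : nat := ex_minn (colorable_exists X).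

Definition nbhd1 (v : T) : {set T} := [set u | (u == v) || e v u].

(* chi^1(G) = max_v chi(N^1[v]), and 0 for the null graph *)
Definition chi1 : nat := \max_(v : T) chi (nbhd1 v).

Definition connected_set (X : {set T}) : Prop :=
  X != set0 /\
  forall x y, x \in X -> y \in X ->
    connect [rel a b | [&& e a b, a \in X & b \in X]] x y.

Definition has_nbr_in (v : T) (X : {set T}) : bool := [exists u in X, e v u].

Definition induced_path (k : nat) (p : 'I_k.+1 -> T) : Prop :=
  injective p /\
  forall i j : 'I_k.+1, e (p i) (p j) = ((i.+1 == j) || (j.+1 == i)).

End Graph.

(* Main.v *)
Require Import Defs.
From mathcomp Require Import all_boot zify.
Set Implicit Arguments. Unset Strict Implicit. Unset Printing Implicit Defensive.

Lemma colP (T : finType) (e : rel T) (X : {set T}) k :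
  reflect (exists f : {ffun T -> 'I_k}, forall x y, x \in X -> y \in X -> x != y -> e x y -> f x != f y)
          (colorable e X k).
Proof.
apply: (iffP existsP) => [[f /forallP Hf]|[f Hf]]; exists f.
- move=> x y xX yX nxy exy; move/implyP: (Hf x) => /(_ xX) /forallP /(_ y) /implyP /(_ yX) /implyP.
  by apply; rewrite nxy exy.
- apply/forallP => x; apply/implyP => xX; apply/forallP => y; apply/implyP => yX.
  by apply/implyP => /andP [nxy exy]; apply: Hf.
Qed.

Lemma chi_le (T : finType) (e : rel T) (X : {set T}) k : colorable e X k -> chi e X <= k.
Proof. rewrite /chi; case: ex_minnP => n _ H; exact: H. Qed.

Lemma chi_col (T : finType) (e : rel T) (X : {set T}) : colorable e X (chi e X).
Proof. by rewrite /chi; case: ex_minnP. Qed.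

Lemma col_sub (T : finType) (e : rel T) (X Y : {set T}) k : Y \subset X -> colorable e X k -> colorable e Y k.
Proof.
move=> /subsetP YX /colP [f Hf]; apply/colP; exists f => x y xY yY; apply: Hf; exact: YX.
Qed.

Lemma chi_mono (T : finType) (e : rel T) (X Y : {set T}) : Y \subset X -> chi e Y <= chi e X.
Proof. move=> YX; apply: chi_le; apply: col_sub YX (chi_col _ _). Qed.

Lemma col_union (T : finType) (e : rel T) (e_sym : symmetric e) (A B : {set T}) m (g h : {ffun T -> 'I_m}) :
  (forall x y, x \in A -> y \in A -> x != y -> e x y -> g x != g y) ->
  (forall x y, x \in B -> y \in B -> x != y -> e x y -> h x != h y) ->
  (forall x y, x \in A -> y \in B -> y \notin A -> e x y -> g x != h y) ->
  colorable e (A :|: B) m.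
Proof.
move=> Hg Hh Hc; apply/colP; exists [ffun x => if x \in A then g x else h x].
move=> x y; rewrite !in_setU !ffunE => xAB yAB nxy exy.
case xA: (x \in A); case yA: (y \in A).
- exact: Hg.
- apply: Hc => //; [by case/orP: yAB; rewrite ?yA|by rewrite yA].
- rewrite eq_sym; apply: Hc => //; [by case/orP: xAB; rewrite ?xA|by rewrite xA|by rewrite e_sym].
- apply: Hh => //; [by case/orP: xAB; rewrite ?xA|by case/orP: yAB; rewrite ?yA].
Qed.

Lemma chi_union (T : finType) (e : rel T) (e_sym : symmetric e) (A B : {set T}) :
  chi e (A :|: B) <= chi e A + chi e B.
Proof.
apply: chi_le.
case/colP: (chi_col e A) => g Hg; case/colP: (chi_col e B) => h Hh.
apply: (@col_union _ _ e_sym _ _ _ [ffun x => lshift (chi e B) (g x)] [ffun x => rshift (chi e A) (h x)]).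
- move=> x y xA yA nxy exy; rewrite !ffunE; apply/negP => /eqP [] /val_inj /eqP.
  by apply/negP; apply: Hg.
- move=> x y xA yA nxy exy; rewrite !ffunE; apply/negP => /eqP [] /eqP.
  rewrite eqn_add2l => /eqP /val_inj /eqP; by apply/negP; apply: Hh.
- move=> x y _ _ _ _; rewrite !ffunE; apply/negP => /eqP [] E.
  have := ltn_ord (g x); rewrite E; lia.
Qed.

Lemma chi_union_sep (T : finType) (e : rel T) (e_sym : symmetric e) (A B : {set T}) :
  (forall x y, x \in A -> y \in B -> y \notin A -> ~~ e x y) ->
  chi e (A :|: B) <= maxn (chi e A) (chi e B).
Proof.
move=> Hs; apply: chi_le.
have cA : colorable e A (maxn (chi e A) (chi e B)).
  case/colP: (chi_col e A) => g Hg; apply/colP.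
  exists [ffun x => widen_ord (leq_maxl _ _) (g x)] => x y xA yA nxy exy; rewrite !ffunE.
  by apply/negP => /eqP [] /val_inj /eqP; apply/negP; apply: Hg.
have cB : colorable e B (maxn (chi e A) (chi e B)).
  case/colP: (chi_col e B) => g Hg; apply/colP.
  exists [ffun x => widen_ord (leq_maxr _ _) (g x)] => x y xA yA nxy exy; rewrite !ffunE.
  by apply/negP => /eqP [] /val_inj /eqP; apply/negP; apply: Hg.
case/colP: cA => g Hg; case/colP: cB => h Hh.
apply: (col_union e_sym Hg Hh) => x y xA yB ynA exy.
by have := Hs x y xA yB ynA; rewrite exy.
Qed.

Lemma connect_pres (T : finType) (r : rel T) (S : {set T}) x y :
  (forall a b, r a b -> a \in S -> b \in S) -> connect r x y -> x \in S -> y \in S.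
Proof.
move=> H /connectP [p pth ->]; elim: p x pth => //= a p IH x /andP [rxa pth] xS.
exact: IH _ pth (H _ _ rxa xS).
Qed.

Lemma comp_exists (T : finType) (e : rel T) (e_sym : symmetric e) n (X : {set T}) :
  #|X| <= n -> X != set0 ->
  exists D : {set T}, [/\ D \subset X, connected_set e D,
    (forall a b, a \in D -> b \in X -> e a b -> b \in D) & chi e X <= chi e D].
Proof.
elim: n X => [|n IH] X cX nX.
  have X0 : #|X| = 0 by lia.
  by move: nX; rewrite (cards0_eq X0) eqxx.
case/set0Pn: nX => x xX.
set relX := [rel a b | [&& e a b, a \in X & b \in X]].
set D0 := [set y in X | connect relX x y].
have xD0 : x \in D0 by rewrite inE xX connect0.
have D0X : D0 \subset X by apply/subsetP => y; rewrite inE => /andP [].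
have closD0 : forall a b, a \in D0 -> b \in X -> e a b -> b \in D0.
  move=> a b; rewrite !inE => /andP [aX cxa] bX eab; rewrite bX /=.
  apply: connect_trans cxa (connect1 _); by rewrite /= eab aX bX.
have connD0 : connected_set e D0.
  split; first by apply/set0Pn; exists x.
  set relD := [rel a b | [&& e a b, a \in D0 & b \in D0]].
  have symD : connect_sym relD.
    apply: sym_connect_sym => a b /=; rewrite e_sym; by case: (a \in D0); case: (b \in D0); rewrite ?andbF.
  have Hx : forall y, y \in D0 -> connect relD x y.
    move=> y yD.
    pose S := [set z | (z \in D0) && connect relD x z].
    have memS : forall z, (z \in S) = (z \in D0) && connect relD x z by move=> z; rewrite inE.
    have : y \in S.
      apply: (@connect_pres _ relX _ x) => //.
      - move=> a b /= /and3P [eab aX bX]; rewrite memS => /andP [aD cxa].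
        rewrite memS.
        have bD := closD0 _ _ aD bX eab; rewrite bD /=.
        apply: connect_trans cxa (connect1 _); by rewrite /= eab aD bD.
      - by move: yD; rewrite inE => /andP [].
      - by rewrite memS xD0 connect0.
    by rewrite memS => /andP [].
  move=> y z yD zD; apply: connect_trans (Hx z zD); rewrite symD; exact: Hx.
have XU : X \subset D0 :|: X :\: D0.
  apply/subsetP => y yX; rewrite in_setU in_setD yX; by case: (y \in D0).
case E : (X :\: D0 == set0).
  exists D0; split => //; apply: chi_mono; by rewrite -setD_eq0.
case: (leqP (chi e X) (chi e D0)) => [le|lt]; first by exists D0.
have hmax : chi e X <= maxn (chi e D0) (chi e (X :\: D0)).
  apply: leq_trans (chi_mono e XU) _; apply: chi_union_sep => // a b aD.
  rewrite in_setD => /andP [_ bX] bnD; apply/negP => eab; move/negP: bnD; apply.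
  exact: closD0 aD bX eab.
have hcard : #|X :\: D0| <= n.
  have : X :\: D0 \subset X :\ x.
    apply/subsetP => y; rewrite !in_setD in_set1 => /andP [yD ->]; rewrite andbT.
    by apply: contra yD => /eqP ->.
  move/subset_leq_card; move: cX; rewrite (cardsD1 x X) xX; lia.
case: (IH (X :\: D0) hcard (negbT E)) => D [DX cD clD chD].
exists D; split => //.
- apply: subset_trans DX _; exact: subsetDl.
- move=> a b aD bX eab; refine (clD a b aD _ eab).
  rewrite in_setD bX andbT; apply/negP => bD0.
  have := (subsetP DX) a aD; rewrite in_setD => /andP [/negP aD0 aX]; apply: aD0.
  apply: closD0 bD0 aX _; by rewrite e_sym.
- apply: leq_trans chD; move: hmax lt; lia.
Qed.

Lemma nbr_in (T : finType) (e : rel T) v (X : {set T}) u : u \in X -> e v u -> has_nbr_in e v X.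
Proof. by move=> uX evu; apply/existsP; exists u; rewrite uX evu. Qed.

Lemma nbr_out (T : finType) (e : rel T) v (X : {set T}) : has_nbr_in e v X -> exists2 u, u \in X & e v u.
Proof. by case/existsP => u /andP [uX evu]; exists u. Qed.

Lemma nbr_F (T : finType) (e : rel T) v (X : {set T}) u : ~~ has_nbr_in e v X -> u \in X -> e v u = false.
Proof. move=> H uX; apply/negbTE; apply: contra H; exact: nbr_in. Qed.

Lemma aux (T : finType) (e : rel T) (e_sym : symmetric e) (e_irr : irreflexive e)
  (k : nat) (C : {set T}) (x0 : T) :
  x0 \notin C -> connected_set e C -> has_nbr_in e x0 C -> k * chi1 e < chi e C ->
  exists (q : nat -> T) (C' : {set T}),
  [/\ (forall i j, i <= k -> j <= k -> q i = q j -> i = j),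
     (forall i j, i <= k -> j <= k -> e (q i) (q j) = (i.+1 == j) || (j.+1 == i)),
     q 0 = x0,
     (forall i, 0 < i -> i <= k -> q i \in C) &
  [/\ C' \subset C, (forall i, i <= k -> q i \notin C'), connected_set e C', has_nbr_in e (q k) C' &
     ((forall i, i < k -> ~~ has_nbr_in e (q i) C') /\ chi e C - k * chi1 e <= chi e C')]].
Proof.
move=> x0C cC hx0.
elim: k => [|k IH] lt.
  exists (fun _ => x0), C; split => //.
  - move=> i j; lia.
  - move=> i j hi hj; have -> : i = 0 by lia. have -> : j = 0 by lia. by rewrite e_irr.
  - move=> i; lia.
  - split => //; split => //; by rewrite subn0.
set m := chi1 e.
have ltk : k * m < chi e C by move: lt; rewrite mulSn; lia.
case: (IH ltk) => q [C' [qinj qedge q0 qC [C'C qC' cC' hnk [hnb chC']]]].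
set N := [set u in C' | e (q k) u].
set R := C' :\: N.
have memN : forall u, (u \in N) = (u \in C') && e (q k) u by move=> u; rewrite inE.
have hN : chi e N <= m.
  apply: leq_trans (@leq_bigmax _ (fun v => chi e (nbhd1 e v)) (q k)).
  apply: chi_mono; apply/subsetP => u; rewrite memN inE => /andP [_ ->]; by rewrite orbT.
have hU : chi e C' <= chi e R + chi e N.
  apply: leq_trans (chi_union e_sym R N); apply: chi_mono; apply/subsetP => u uC.
  by rewrite in_setU in_setD uC andbT; case: (u \in N).
have big : m < chi e C' by move: lt chC'; rewrite mulSn; lia.
have Rn0 : R != set0.
  apply/negP => /eqP R0.
  have : C' \subset N by rewrite -setD_eq0 -/R R0.
  move/(chi_mono e); move: hN big; lia.
case: (comp_exists e_sym (leqnn #|R|) Rn0) => D [DR cD clD chD].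
have DC' : forall u, u \in D -> (u \in C') && (u \notin N).
  move=> u uD; have := (subsetP DR) u uD; by rewrite in_setD andbC.
have : [exists a, exists b, [&& a \in D, b \in C', e a b & b \notin D]].
  apply: contraT => /negP H.
  have cl : forall a b, [rel a b | [&& e a b, a \in C' & b \in C']] a b -> a \in D -> b \in D.
    move=> a b /= /and3P [eab aC bC] aD; apply: contraT => bD; exfalso; apply: H.
    by apply/existsP; exists a; apply/existsP; exists b; rewrite aD bC eab bD.
  case: cD => /set0Pn [d dD] _.
  case/nbr_out: hnk => n0 n0C ekn.
  have dC := DC' d dD; case/andP: dC => dC _.
  have := connect_pres cl (proj2 cC' d n0 dC n0C) dD.
  move/DC' => /andP [_]; by rewrite memN n0C ekn.
case/existsP => a /existsP [y /and4P [aD yC eay ynD]].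
have yN : y \in N.
  apply: contraT => yN.
  have yR : y \in R by rewrite in_setD yN yC.
  by rewrite (clD a y aD yR eay) in ynD.
have eky : e (q k) y by move: yN; rewrite memN => /andP [].
have qy : forall i, i <= k -> q i != y.
  move=> i ik; apply/eqP => E; move: (qC' i ik); by rewrite E yC.
have hnbF : forall i u, i < k -> u \in C' -> e (q i) u = false.
  move=> i u ik uC; exact: nbr_F (hnb i ik) uC.
exists (fun n => if n <= k then q n else y), D; split.
- move=> i j hi hj /=; case: (leqP i k) => ik; case: (leqP j k) => jk.
  + exact: qinj.
  + by move=> E; move: (qy i ik); rewrite E eqxx.
  + by move=> E; move: (qy j jk); rewrite E eqxx.
  + move=> _; clear -hi hj ik jk; lia.
- move=> i j hi hj /=; case: (leqP i k) => ik; case: (leqP j k) => jk.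
  + exact: qedge.
  + have -> : j = k.+1 by clear -hj jk; lia.
    case: (ltngtP i k) => ik'; first last.
    * by rewrite ik' eky eqxx.
    * clear -ik ik'; lia.
    * rewrite hnbF //; symmetry; apply/negbTE/norP; split; apply/eqP; clear -ik'; lia.
  + have -> : i = k.+1 by clear -hi ik; lia.
    rewrite e_sym.
    case: (ltngtP j k) => jk'; first last.
    * by rewrite jk' eky eqxx orbT.
    * clear -jk jk'; lia.
    * rewrite hnbF //; symmetry; apply/negbTE/norP; split; apply/eqP; clear -jk'; lia.
  + have -> : i = k.+1 by clear -hi ik; lia. have -> : j = k.+1 by clear -hj jk; lia.
    rewrite e_irr; symmetry; apply/negbTE/norP; split; apply/eqP; clear; lia.
- by [].
- move=> i i0 ik /=; case: (leqP i k) => ik'; first exact: qC.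
  exact: (subsetP C'C).
- split.
  + apply/subsetP => u uD; have := DC' u uD; case/andP => uC _; exact: (subsetP C'C).
  + move=> i ik /=; case: (leqP i k) => ik'.
    * apply/negP => qD; have := DC' _ qD; by rewrite (negbTE (qC' i ik')).
    * by [].
  + exact: cD.
  + rewrite ltnn; apply: nbr_in aD _; by rewrite e_sym.
  split.
  + move=> i ik /=; rewrite ltnS in ik; rewrite ik.
    apply/negP => /nbr_out [u uD equ]; have := DC' u uD; case/andP => uC uN.
    case: (ltngtP i k) => ik'.
    * by rewrite hnbF in equ.
    * clear -ik ik'; lia.
    * by move: uN; rewrite memN uC -ik' equ.
  + move: chD hU hN chC'; rewrite mulSn; clear; lia.
Qed.

Theorem mainTheorem4 (T : finType) (e : rel T)
  (e_sym : symmetric e) (e_irr : irreflexive e)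
  (k : nat) (C : {set T}) (x0 : T) :
  x0 \notin C ->
  connected_set e C ->
  has_nbr_in e x0 C ->
  k * chi1 e < chi e C ->
  exists (p : 'I_k.+1 -> T) (C' : {set T}),
    induced_path e p /\
    p ord0 = x0 /\
    (forall i : 'I_k.+1, 0 < i -> p i \in C) /\
    C' \subset C /\
    (forall i : 'I_k.+1, p i \notin C') /\
    connected_set e C' /\
    has_nbr_in e (p ord_max) C' /\
    (forall i : 'I_k.+1, i < k -> ~~ has_nbr_in e (p i) C') /\
    chi e C - k * chi1 e <= chi e C'.
Proof.
move=> x0C cC hx lt.
case: (aux e_sym e_irr x0C cC hx lt) => q [C' [qinj qedge q0 qC [C'C qC' cC' hnk [hnb chC']]]].
have hk : forall i : 'I_k.+1, (i : nat) <= k by move=> i; rewrite -ltnS; exact: ltn_ord.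
exists (fun i : 'I_k.+1 => q i), C'.
split; first split.
- move=> i j E; apply: val_inj; exact: qinj (hk i) (hk j) E.
- move=> i j; exact: qedge (hk i) (hk j).
split; first by [].
split; first by move=> i i0; exact: qC i0 (hk i).
split; first by [].
split; first by move=> i; exact: qC' (hk i).
split; first by [].
split; first by [].
split; first by move=> i ik; exact: hnb ik.
by [].
Qed.
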